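(* Let $n\ge1$ and let $a_1,\dots,a_n$ be real numbers with $\sum_{j=1}^n a_j=1$. Put $C(t)=\sum_{j=1}^n a_j\cos jt$ and $S(t)=\sum_{j=1}^n a_j\sin jt$. Then $$\rho=\min_{t\in\mathbb R}\{C(t):\ S(t)=0\}$$ is negative. *)

(* Defs.v *)
From Stdlib Require Import Reals.
Open Scope R_scope.

Fixpoint sum1n (n : nat) (f : nat -> R) : R :=
  match n with
  | O => 0
  | S m => sum1n m f + f (S m)
  end.

Definition Cfun (n : nat) (a : nat -> R) (t : R) : R :=
  sum1n n (fun j => a j * cos (INR j * t)).
Definition Sfun (n : nat) (a : nat -> R) (t : R) : R :=
  sum1n n (fun j => a j * sin (INR j * t)).

(* Main.v *)
Require Import Defs.
From Stdlib Require Import Reals Lra Lia Classical FunctionalExtensionality List.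
From Coquelicot Require Import Coquelicot.
Open Scope R_scope.

Definition ei (t : R) : C := (cos t, sin t).

Lemma ei_mult a b : (ei a * ei b)%C = ei (a + b).
Proof. unfold ei, Cmult; simpl; rewrite cos_plus, sin_plus; f_equal; ring. Qed.

Lemma ei_pow t n : (ei t ^ n)%C = ei (INR n * t).
Proof.
induction n as [|n IH].
- simpl. unfold ei. rewrite Rmult_0_l, cos_0, sin_0. reflexivity.
- rewrite Cpow_S, IH, ei_mult, S_INR. f_equal. ring.
Qed.

Lemma Cmod_ei t : Cmod (ei t) = 1.
Proof.
unfold Cmod, ei; simpl.
replace (cos t * (cos t * 1) + sin t * (sin t * 1)) with (Rsqr (sin t) + Rsqr (cos t)) by (unfold Rsqr; ring).
rewrite sin2_cos2. apply sqrt_1.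
Qed.

Lemma circle x y : x * x + y * y = 1 -> exists t, cos t = x /\ sin t = y.
Proof.
intros H.
assert (Hx : -1 <= x <= 1) by nra.
assert (Hs : 1 - x² = y * y) by (unfold Rsqr; lra).
destruct (Rle_or_lt 0 y) as [Hy|Hy].
- exists (acos x). split. apply cos_acos; auto.
  rewrite sin_acos by auto. rewrite Hs. apply sqrt_square; auto.
- exists (- acos x). split. rewrite cos_neg. apply cos_acos; auto.
  rewrite sin_neg, sin_acos by auto. rewrite Hs.
  replace (y * y) with ((-y) * (-y)) by ring. rewrite sqrt_square by lra. ring.
Qed.

Lemma Cmod_pair x y : Cmod (x, y) = sqrt (x * x + y * y).
Proof. unfold Cmod; simpl; f_equal; ring. Qed.

Lemma polar (d : C) : d <> 0%C -> exists phi, d = (RtoC (Cmod d) * ei phi)%C.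
Proof.
intros Hd. destruct d as [u v].
pose proof (proj1 (Cmod_gt_0 _) Hd) as Hr.
rewrite Cmod_pair in *.
set (r := sqrt (u * u + v * v)) in *.
assert (Hr2 : r * r = u * u + v * v).
{ unfold r. apply sqrt_sqrt. nra. }
destruct (circle (u / r) (v / r)) as [t [Ht1 Ht2]].
{ replace (u / r * (u / r) + v / r * (v / r)) with ((u * u + v * v) / (r * r)) by (field; lra). rewrite <- Hr2. field. lra. }
exists t. unfold ei, RtoC, Cmult; simpl. rewrite Ht1, Ht2. f_equal; field; lra.
Qed.

Fixpoint ev (l : list C) (z : C) : C :=
  match l with nil => 0%C | cons c l' => (c + z * ev l' z)%C end.

Lemma ev_add : forall l1 l2, exists l, forall z, ev l z = (ev l1 z + ev l2 z)%C.
Proof.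
induction l1 as [|c l1 IH]; intros l2.
- exists l2; intros; simpl; ring.
- destruct l2 as [|c2 l2].
  + exists (c :: l1); intros; simpl; ring.
  + destruct (IH l2) as [l Hl]. exists ((c + c2)%C :: l); intros; simpl; rewrite Hl; ring.
Qed.

Lemma ev_scale c : forall l, exists l', forall z, ev l' z = (c * ev l z)%C.
Proof.
induction l as [|a l IH].
- exists nil; intros; simpl; ring.
- destruct IH as [l' H]. exists ((c * a)%C :: l'); intros; simpl; rewrite H; ring.
Qed.

Lemma ev_shift z0 : forall l, exists l', forall h, ev l' h = ev l (z0 + h)%C.
Proof.
induction l as [|c l IH].
- exists nil. intros; reflexivity.
- destruct IH as [L HL]. destruct (ev_scale z0 L) as [L1 H1].
  destruct (ev_add (c :: nil) L1) as [L2 H2].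
  destruct (ev_add L2 (RtoC 0 :: L)) as [L3 H3].
  exists L3. intros h. rewrite H3, H2. simpl. rewrite H1, HL. ring.
Qed.

Lemma ev_lead : forall l, (forall h, ev l h = 0%C) \/
  exists k (d : C) l2, d <> RtoC 0 /\ forall h, ev l h = (h ^ k * (d + h * ev l2 h))%C.
Proof.
induction l as [|c l IH].
- left; reflexivity.
- destruct (classic (c = 0%C)) as [Hc|Hc].
  + destruct IH as [IH|[k [d [l2 [Hd H]]]]].
    * left. intros h. simpl. rewrite IH, Hc. ring.
    * right. exists (S k), d, l2. split; auto. intros h. simpl. rewrite H, Hc. ring.
  + right. exists O, c, l. split; auto. intros h. simpl. ring.
Qed.

Lemma ev_bound : forall l, exists B, 0 <= B /\ forall h, Cmod h <= 1 -> Cmod (ev l h) <= B.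
Proof.
induction l as [|c l IH].
- exists 0. split. lra. intros h _. simpl. rewrite Cmod_0. lra.
- destruct IH as [B [HB H]]. exists (Cmod c + B). split.
  + pose proof (Cmod_ge_0 c); lra.
  + intros h Hh. simpl. eapply Rle_trans. apply Cmod_triangle.
    rewrite Cmod_mult. pose proof (H h Hh). pose proof (Cmod_ge_0 h).
    pose proof (Cmod_ge_0 (ev l h)). nra.
Qed.

Lemma cplus f g : continuity f -> continuity g -> continuity (fun x => f x + g x).
Proof. intros; apply (continuity_plus f g); auto. Qed.
Lemma cminus f g : continuity f -> continuity g -> continuity (fun x => f x - g x).
Proof. intros; apply (continuity_minus f g); auto. Qed.
Lemma cmult f g : continuity f -> continuity g -> continuity (fun x => f x * g x).
Proof. intros; apply (continuity_mult f g); auto. Qed.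
Lemma cconst c : continuity (fun _ => c).
Proof. apply continuity_const. intros x y; reflexivity. Qed.

Lemma ev_cont l (g : R -> C) : continuity (fun t => fst (g t)) -> continuity (fun t => snd (g t)) ->
  continuity (fun t => fst (ev l (g t))) /\ continuity (fun t => snd (ev l (g t))).
Proof.
intros H1 H2. induction l as [|c l [IH1 IH2]].
- simpl. split; apply cconst.
- simpl. split.
  + apply cplus. apply cconst. apply cminus; apply cmult; auto.
  + apply cplus. apply cconst. apply cplus; apply cmult; auto.
Qed.
Lemma cos_ge b : -(PI/4) <= b <= PI/4 -> 1 / sqrt 2 <= cos b.
Proof.
intros Hb. rewrite <- cos_PI4. pose proof PI_RGT_0.
destruct (Rle_or_lt 0 b).
- destruct (Req_dec b (PI/4)) as [->|Hne]. lra.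
  left. apply cos_decreasing_1; lra.
- rewrite <- (cos_neg b). destruct (Req_dec (-b) (PI/4)) as [->|Hne]. lra.
  left. apply cos_decreasing_1; lra.
Qed.

Lemma sqrt2_facts : 0 < 1 / sqrt 2 /\ 1/4 < 1 / sqrt 2.
Proof.
pose proof (sqrt_lt_R0 2 ltac:(lra)) as H.
pose proof (sqrt_sqrt 2 ltac:(lra)) as H2.
split. apply Rdiv_lt_0_compat; lra.
assert (sqrt 2 < 4) by nra.
unfold Rdiv; rewrite !Rmult_1_l; apply Rinv_lt_contravar; nra.
Qed.

Lemma comp_snd (c : C) (D r a : R) (e : C) :
  snd (c + RtoC D * (RtoC r * ei a + e))%C = snd c + D * (r * sin a + snd e).
Proof. destruct c, e; unfold ei, RtoC; simpl; ring. Qed.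
Lemma comp_fst (c : C) (D r a : R) (e : C) :
  fst (c + RtoC D * (RtoC r * ei a + e))%C = fst c + D * (r * cos a + fst e).
Proof. destruct c, e; unfold ei, RtoC; simpl; ring. Qed.

Lemma snd_le (e : C) : Rabs (snd e) <= Cmod e.
Proof. eapply Rle_trans; [apply Rmax_r| apply Rmax_Cmod]. Qed.
Lemma fst_le (e : C) : Rabs (fst e) <= Cmod e.
Proof. eapply Rle_trans; [apply Rmax_l| apply Rmax_Cmod]. Qed.

Lemma abs_bounds x r : Rabs x <= r -> -r <= x <= r.
Proof. intros H. split_Rabs; lra. Qed.

Lemma openness (f : C -> C) (l : list C) (Hl : forall z, ev l z = f z) (z0 : C)
  (Hnc : exists w, f w <> f z0) (d0 : R) (Hd0 : 0 < d0) :
  exists h, Cmod h < d0 /\ snd (f (z0 + h)%C) = snd (f z0) /\ fst (f (z0 + h)%C) < fst (f z0).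
Proof.
destruct (ev_shift z0 l) as [L HL].
assert (HfL : forall h, f (z0 + h)%C = ev L h) by (intros; rewrite HL, Hl; reflexivity).
destruct Hnc as [w Hw].
assert (Hw' : f (z0 + (w - z0))%C <> f (z0 + 0)%C).
{ replace (z0 + (w - z0))%C with w by ring. replace (z0 + 0)%C with z0 by ring. exact Hw. }
rewrite !HfL in Hw'.
destruct L as [|c cs].
{ simpl in Hw'. exfalso; congruence. }
destruct (ev_lead cs) as [Hz | [k [d [l2 [Hd Hcs]]]]].
{ cbn [ev] in Hw'. rewrite !Hz in Hw'. exfalso; apply Hw'. ring. }
assert (Hc : f z0 = c).
{ replace z0 with (z0 + 0)%C at 1 by ring. rewrite HfL. cbn [ev]. ring. }
assert (Hexp : forall h, f (z0 + h)%C = (c + h ^ (S k) * (d + h * ev l2 h))%C).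
{ intros h. rewrite HfL. cbn [ev]. rewrite Hcs, Cpow_S. ring. }
destruct (ev_bound l2) as [B [HB0 HB]].
destruct (polar d Hd) as [phi Hphi].
assert (Hrho : 0 < Cmod d) by (apply Cmod_gt_0; exact Hd).
set (rho := Cmod d) in *.
assert (HK : 0 < INR (S k)) by (apply lt_0_INR; lia).
set (m := rho / (4 * (B + 1))).
assert (Hm : 0 < m) by (unfold m; apply Rdiv_lt_0_compat; lra).
assert (Hm2 : m * (4 * (B + 1)) = rho) by (unfold m; field; lra).
set (del := Rmin (d0/2) (Rmin (1/2) m)).
assert (Hdel0 : 0 < del).
{ unfold del. repeat apply Rmin_glb_lt; lra. }
assert (Hdel1 : del < d0).
{ unfold del. pose proof (Rmin_l (d0/2) (Rmin (1/2) m)). lra. }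
assert (Hdel2 : del <= 1).
{ unfold del. pose proof (Rmin_r (d0/2) (Rmin (1/2) m)). pose proof (Rmin_l (1/2) m). lra. }
assert (Hdel3 : del * B <= rho / 4).
{ assert (del <= m). { unfold del. pose proof (Rmin_r (d0/2) (Rmin (1/2) m)). pose proof (Rmin_r (1/2) m). lra. }
  nra. }
set (hh := fun t => (RtoC del * ei t)%C).
assert (Hmodh : forall t, Cmod (hh t) = del).
{ intros t. unfold hh. rewrite Cmod_mult, Cmod_R, Cmod_ei, Rabs_pos_eq; lra. }
set (E := fun t => (ei (INR (S k) * t) * (hh t * ev l2 (hh t)))%C).
assert (HE : forall t, Cmod (E t) <= rho / 4).
{ intros t. unfold E. rewrite !Cmod_mult, Cmod_ei, Hmodh.
  pose proof (HB (hh t) ltac:(rewrite Hmodh; lra)). nra. }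
assert (Hform : forall t, f (z0 + hh t)%C = (c + RtoC (del ^ (S k)) * (RtoC rho * ei (INR (S k) * t + phi) + E t))%C).
{ intros t. rewrite Hexp. unfold E. unfold hh at 1 2.
  rewrite Cpow_mult_l, ei_pow, <- RtoC_pow. rewrite Hphi at 1.
  rewrite <- ei_mult. fold (hh t). ring. }
pose proof sqrt2_facts as [Hs1 Hs2].
set (th := fun b => (PI + b - phi) / INR (S k)).
assert (Hth : forall b, INR (S k) * th b + phi = PI + b).
{ intros b. unfold th. field. lra. }
set (G := fun t => snd c - snd (ev (c :: cs) (hh t))).
assert (HG : forall t, G t = - (del ^ (S k) * (rho * sin (INR (S k) * t + phi) + snd (E t)))).
{ intros t. unfold G. rewrite <- HfL, Hform, comp_snd. ring. }
assert (Hpos : 0 < del ^ (S k)) by (apply pow_lt; lra).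
assert (HcontG : continuity G).
{ unfold G. apply cminus. apply cconst.
  assert (H1 : continuity (fun t => fst (hh t))).
  { assert (Heq : (fun t => fst (hh t)) = (fun t => del * cos t - 0 * sin t)).
    { apply functional_extensionality. intros t. unfold hh, ei, RtoC. simpl. reflexivity. }
    rewrite Heq. apply cminus; apply cmult; try apply cconst. apply continuity_cos. apply continuity_sin. }
  assert (H2 : continuity (fun t => snd (hh t))).
  { assert (Heq : (fun t => snd (hh t)) = (fun t => del * sin t + 0 * cos t)).
    { apply functional_extensionality. intros t. unfold hh, ei, RtoC. simpl. reflexivity. }
    rewrite Heq. apply cplus; apply cmult; try apply cconst. apply continuity_sin. apply continuity_cos. }
  exact (proj2 (ev_cont (c :: cs) hh H1 H2)). }
assert (Hlt12 : th (-(PI/4)) < th (PI/4)).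
{ unfold th. apply Rmult_lt_compat_r. apply Rinv_0_lt_compat; lra. pose proof PI_RGT_0; lra. }
assert (HG1 : G (th (-(PI/4))) < 0).
{ rewrite HG, Hth. replace (PI + - (PI/4)) with (-(PI/4) + PI) by ring.
  rewrite neg_sin, sin_neg, sin_PI4.
  pose proof (snd_le (E (th (- (PI / 4))))). pose proof (HE (th (- (PI / 4)))).
  pose proof (abs_bounds (snd (E (th (- (PI / 4))))) (rho/4) ltac:(lra)).
  assert (0 < rho * (- - (1 / sqrt 2)) + snd (E (th (- (PI / 4))))) by nra.
  nra. }
assert (HG2 : 0 < G (th (PI/4))).
{ rewrite HG, Hth. replace (PI + PI/4) with (PI/4 + PI) by ring.
  rewrite neg_sin, sin_PI4.
  pose proof (snd_le (E (th (PI / 4)))). pose proof (HE (th (PI / 4))).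
  pose proof (abs_bounds (snd (E (th (PI / 4)))) (rho/4) ltac:(lra)).
  assert (rho * (- (1 / sqrt 2)) + snd (E (th (PI / 4))) < 0) by nra.
  nra. }
destruct (IVT G _ _ HcontG Hlt12 HG1 HG2) as [ts [Hts HGts]].
exists (hh ts). split; [rewrite Hmodh; lra|].
set (b := INR (S k) * ts + phi - PI).
assert (Hb : -(PI/4) <= b <= PI/4).
{ unfold b. destruct Hts as [Ht1 Ht2].
  apply (Rmult_le_compat_l (INR (S k))) in Ht1; [|lra].
  apply (Rmult_le_compat_l (INR (S k))) in Ht2; [|lra].
  pose proof (Hth (-(PI/4))). pose proof (Hth (PI/4)). lra. }
split.
- rewrite Hc. rewrite HfL. unfold G in HGts. lra.
- rewrite Hform, Hc, comp_fst.
  replace (INR (S k) * ts + phi) with (b + PI) by (unfold b; ring).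
  rewrite neg_cos. pose proof (cos_ge b Hb).
  pose proof (fst_le (E ts)). pose proof (HE ts).
  pose proof (abs_bounds (fst (E ts)) (rho/4) ltac:(lra)).
  assert (rho * - cos b + fst (E ts) < 0) by nra.
  nra.
Qed.

Definition cont2 (f : R -> R -> R) : Prop :=
  forall x y e, 0 < e -> exists d, 0 < d /\ forall u v,
    Rabs (u - x) < d -> Rabs (v - y) < d -> Rabs (f u v - f x y) < e.

Lemma cont2_lin (a b c : R) : cont2 (fun x y => a * x + b * y + c).
Proof.
intros x y e He.
exists (e / (Rabs a + Rabs b + 1)).
assert (Hp : 0 < Rabs a + Rabs b + 1) by (pose proof (Rabs_pos a); pose proof (Rabs_pos b); lra).
split. { apply Rdiv_lt_0_compat; lra. }
intros u v Hu Hv.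
replace (a * u + b * v + c - (a * x + b * y + c)) with (a * (u - x) + b * (v - y)) by ring.
eapply Rle_lt_trans. apply Rabs_triang.
rewrite !Rabs_mult.
set (d := e / (Rabs a + Rabs b + 1)) in *.
assert (Rabs a * Rabs (u - x) <= Rabs a * d) by (apply Rmult_le_compat_l; [apply Rabs_pos| lra]).
assert (Rabs b * Rabs (v - y) <= Rabs b * d) by (apply Rmult_le_compat_l; [apply Rabs_pos| lra]).
assert (Hd : d * (Rabs a + Rabs b + 1) = e) by (unfold d; field; lra).
assert (0 < d) by (unfold d; apply Rdiv_lt_0_compat; lra).
nra.
Qed.

Lemma cont2_ext f g : (forall x y, f x y = g x y) -> cont2 f -> cont2 g.
Proof. intros H c x y e He; destruct (c x y e He) as [d [Hd H']]; exists d; split; auto; intros; rewrite <- !H; auto. Qed.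

Lemma cont2_const c : cont2 (fun _ _ => c).
Proof. apply (cont2_ext (fun x y => 0 * x + 0 * y + c)); [intros; ring|apply cont2_lin]. Qed.
Lemma cont2_x : cont2 (fun x _ => x).
Proof. apply (cont2_ext (fun x y => 1 * x + 0 * y + 0)); [intros; ring|apply cont2_lin]. Qed.
Lemma cont2_y : cont2 (fun _ y => y).
Proof. apply (cont2_ext (fun x y => 0 * x + 1 * y + 0)); [intros; ring|apply cont2_lin]. Qed.

Lemma cont2_plus f g : cont2 f -> cont2 g -> cont2 (fun x y => f x y + g x y).
Proof.
intros Hf Hg x y e He.
destruct (Hf x y (e/2)) as [d1 [Hd1 H1]]; [lra|].
destruct (Hg x y (e/2)) as [d2 [Hd2 H2]]; [lra|].
exists (Rmin d1 d2). split. apply Rmin_glb_lt; lra.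
intros u v Hu Hv.
pose proof (Rmin_l d1 d2). pose proof (Rmin_r d1 d2).
specialize (H1 u v ltac:(lra) ltac:(lra)). specialize (H2 u v ltac:(lra) ltac:(lra)).
replace (f u v + g u v - (f x y + g x y)) with ((f u v - f x y) + (g u v - g x y)) by ring.
eapply Rle_lt_trans. apply Rabs_triang. lra.
Qed.

Lemma cont2_mult f g : cont2 f -> cont2 g -> cont2 (fun x y => f x y * g x y).
Proof.
intros Hf Hg x y e He.
set (A := Rabs (f x y)). set (Bg := Rabs (g x y)).
assert (HA : 0 <= A) by apply Rabs_pos. assert (HBg: 0 <= Bg) by apply Rabs_pos.
set (e1 := e / (2 * (Bg + 1))). set (e2 := e / (2 * (A + 1))).
assert (He1 : e1 * (Bg + 1) = e/2) by (unfold e1; field; lra).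
assert (He2 : e2 * (A + 1) = e/2) by (unfold e2; field; lra).
assert (He1p : 0 < e1) by (unfold e1; apply Rdiv_lt_0_compat; lra).
assert (He2p : 0 < e2) by (unfold e2; apply Rdiv_lt_0_compat; lra).
destruct (Hf x y e1 He1p) as [d1 [Hd1 H1]].
destruct (Hg x y (Rmin 1 e2)) as [d2 [Hd2 H2]]. { apply Rmin_glb_lt; lra. }
exists (Rmin d1 d2). split. apply Rmin_glb_lt; lra.
intros u v Hu Hv.
pose proof (Rmin_l d1 d2). pose proof (Rmin_r d1 d2).
specialize (H1 u v ltac:(lra) ltac:(lra)). specialize (H2 u v ltac:(lra) ltac:(lra)).
pose proof (Rmin_l 1 e2). pose proof (Rmin_r 1 e2).
replace (f u v * g u v - f x y * g x y) with ((f u v - f x y) * g u v + f x y * (g u v - g x y)) by ring.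
eapply Rle_lt_trans. apply Rabs_triang. rewrite !Rabs_mult.
assert (Hgu : Rabs (g u v) <= Bg + 1).
{ replace (g u v) with ((g u v - g x y) + g x y) by ring.
  eapply Rle_trans. apply Rabs_triang. unfold Bg. lra. }
fold A.
pose proof (Rabs_pos (f u v - f x y)). pose proof (Rabs_pos (g u v)).
pose proof (Rabs_pos (g u v - g x y)).
assert (Rabs (f u v - f x y) * Rabs (g u v) <= Rabs (f u v - f x y) * (Bg + 1)) by (apply Rmult_le_compat_l; lra).
assert (Rabs (f u v - f x y) * (Bg + 1) < e1 * (Bg + 1)) by (apply Rmult_lt_compat_r; lra).
assert (A * Rabs (g u v - g x y) <= (A + 1) * e2) by nra.
lra.
Qed.

Definition bx1 (x y : R) := x - 1.
Definition bx2 (x y : R) := -1 - x.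
Definition by1 (x y : R) := y - 1.
Definition by2 (x y : R) := -1 - y.
Lemma cont2_b : cont2 bx1 /\ cont2 bx2 /\ cont2 by1 /\ cont2 by2.
Proof.
repeat split.
- apply (cont2_ext (fun x y => 1 * x + 0 * y + -1)); [intros; unfold bx1; ring|apply cont2_lin].
- apply (cont2_ext (fun x y => -1 * x + 0 * y + -1)); [intros; unfold bx2; ring|apply cont2_lin].
- apply (cont2_ext (fun x y => 0 * x + 1 * y + -1)); [intros; unfold by1; ring|apply cont2_lin].
- apply (cont2_ext (fun x y => 0 * x + -1 * y + -1)); [intros; unfold by2; ring|apply cont2_lin].
Qed.
Lemma box_help1 x y : bx1 x y <= 0 -> bx2 x y <= 0 -> by1 x y <= 0 -> by2 x y <= 0 ->
  -1 <= x <= 1 /\ -1 <= y <= 1.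
Proof. unfold bx1, bx2, by1, by2; lra. Qed.
Lemma box_help2 x y : -1 <= x <= 1 -> -1 <= y <= 1 ->
  bx1 x y <= 0 /\ bx2 x y <= 0 /\ by1 x y <= 0 /\ by2 x y <= 0.
Proof. unfold bx1, bx2, by1, by2; lra. Qed.

Definition Aset (k1 k2 g : R -> R -> R) (x y : R) : Prop :=
  -1 <= x <= 1 /\ -1 <= y <= 1 /\ k1 x y <= 0 /\ k2 x y <= 0 /\ g x y = 0.

Fixpoint csum (n : nat) (f : nat -> C) : C :=
  match n with O => RtoC 0 | S m => (csum m f + f (S m))%C end.
Definition pz (n : nat) (a : nat -> R) (z : C) : C := csum n (fun j => (RtoC (a j) * z ^ j)%C).

Lemma Re_pz n a z : fst (pz n a z) = sum1n n (fun j => a j * fst (z ^ j)%C).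
Proof. induction n as [|n IH]; [reflexivity|]. unfold pz in *. simpl. rewrite IH. ring. Qed.
Lemma Im_pz n a z : snd (pz n a z) = sum1n n (fun j => a j * snd (z ^ j)%C).
Proof. induction n as [|n IH]; [reflexivity|]. unfold pz in *. simpl. rewrite IH. ring. Qed.

Lemma pw_cont j : cont2 (fun x y => fst ((x, y) ^ j)%C) /\ cont2 (fun x y => snd ((x, y) ^ j)%C).
Proof.
induction j as [|j [IH1 IH2]].
- split; simpl; apply cont2_const.
- split.
  + apply (cont2_ext (fun x y => x * fst ((x, y) ^ j)%C - y * snd ((x, y) ^ j)%C)).
    { intros x y. rewrite Cpow_S. reflexivity. }
    apply (cont2_ext (fun x y => x * fst ((x, y) ^ j)%C + (-1 * y) * snd ((x, y) ^ j)%C)).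
    { intros; ring. }
    apply cont2_plus; apply cont2_mult; auto. apply cont2_x.
    apply (cont2_ext (fun x y => 0 * x + -1 * y + 0)); [intros; ring|apply cont2_lin].
  + apply (cont2_ext (fun x y => x * snd ((x, y) ^ j)%C + y * fst ((x, y) ^ j)%C)).
    { intros x y. rewrite Cpow_S. reflexivity. }
    apply cont2_plus; apply cont2_mult; auto. apply cont2_x. apply cont2_y.
Qed.

Lemma sum_cont (F : nat -> R -> R -> R) n : (forall j, cont2 (F j)) ->
  cont2 (fun x y => sum1n n (fun j => F j x y)).
Proof.
intros H. induction n as [|n IH].
- simpl. apply cont2_const.
- simpl. apply cont2_plus; auto.
Qed.

Lemma Pre_cont n a : cont2 (fun x y => fst (pz n a (x, y))).
Proof.
apply (cont2_ext (fun x y => sum1n n (fun j => a j * fst ((x, y) ^ j)%C))).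
{ intros; rewrite Re_pz; reflexivity. }
apply (sum_cont (fun j x y => a j * fst ((x, y) ^ j)%C)).
intros j. apply cont2_mult. apply cont2_const. apply pw_cont.
Qed.
Lemma Pim_cont n a : cont2 (fun x y => snd (pz n a (x, y))).
Proof.
apply (cont2_ext (fun x y => sum1n n (fun j => a j * snd ((x, y) ^ j)%C))).
{ intros; rewrite Im_pz; reflexivity. }
apply (sum_cont (fun j x y => a j * snd ((x, y) ^ j)%C)).
intros j. apply cont2_mult. apply cont2_const. apply pw_cont.
Qed.

Lemma pow_ev j : exists l, forall z, ev l z = (z ^ j)%C.
Proof.
induction j as [|j [l Hl]].
- exists (RtoC 1 :: nil). intros z. simpl. ring.
- exists (RtoC 0 :: l). intros z. cbn [ev]. rewrite Hl, Cpow_S. ring.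
Qed.

Lemma pz_ev n a : exists l, forall z, ev l z = pz n a z.
Proof.
induction n as [|n [l Hl]].
- exists nil. intros; reflexivity.
- destruct (pow_ev (S n)) as [l1 H1].
  destruct (ev_scale (RtoC (a (S n))) l1) as [l2 H2].
  destruct (ev_add l l2) as [l3 H3].
  exists l3. intros z. rewrite H3, H2, H1, Hl. reflexivity.
Qed.

Lemma sum1n_ext n f g : (forall j, (1 <= j <= n)%nat -> f j = g j) -> sum1n n f = sum1n n g.
Proof.
induction n as [|n IH]; intros H; simpl; auto.
rewrite IH. rewrite H. reflexivity. lia. intros; apply H; lia.
Qed.

Lemma pz_ei n a t : fst (pz n a (ei t)) = Cfun n a t /\ snd (pz n a (ei t)) = Sfun n a t.
Proof.
rewrite Re_pz, Im_pz. unfold Cfun, Sfun. split; apply sum1n_ext; intros j _;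
rewrite ei_pow; reflexivity.
Qed.

Lemma pz_0 n a : pz n a (RtoC 0) = RtoC 0.
Proof.
apply injective_projections.
- rewrite Re_pz. simpl. rewrite (sum1n_ext n _ (fun _ => 0)).
  + clear. induction n; simpl; [reflexivity| rewrite IHn; ring].
  + intros j Hj. destruct j as [|j]; [lia|]. rewrite Cpow_S. simpl. ring.
- rewrite Im_pz. simpl. rewrite (sum1n_ext n _ (fun _ => 0)).
  + clear. induction n; simpl; [reflexivity| rewrite IHn; ring].
  + intros j Hj. destruct j as [|j]; [lia|]. rewrite Cpow_S. simpl. ring.
Qed.

Lemma pz_1 n a : fst (pz n a (RtoC 1)) = sum1n n a.
Proof.
rewrite Re_pz. apply sum1n_ext. intros j _. rewrite Cpow_1_l. simpl. ring.
Qed.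

Module MC.
From mathcomp Require Import all_boot all_order all_algebra.
From mathcomp Require Import all_classical all_reals.
From mathcomp Require Import topology normedtype derive.
From mathcomp Require Import Rstruct Rstruct_topology.
Import Order.TTheory GRing.Theory Num.Theory.
Section S.
Local Open Scope ring_scope.
Local Open Scope classical_set_scope.
Lemma cont2_cont (f : R -> R -> R) : cont2 f ->
  continuous (fun z : R * R => f z.1 z.2).
Proof.
move=> cf [x y]; rewrite /continuous_at.
apply/(@cvgrPdist_lt _ R^o) => e e0.
have [d [d0 Hd]] := cf x y e (elimT RltP e0).
exists (ball x d, ball y d) => /=.
  by split; apply: nbhsx_ballx; apply/RltP.
move=> [u v] [/= hu hv].
rewrite /ball /= in hu hv.
have := Hd u v; rewrite !RabsE => H.
rewrite distrC; apply/RltP; apply: H; apply/RltP; by rewrite distrC.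
Qed.

Lemma EVT2 (f g k1 k2 : R -> R -> R) : cont2 f -> cont2 g -> cont2 k1 -> cont2 k2 ->
  (exists x y, Aset k1 k2 g x y) ->
  exists x y, Aset k1 k2 g x y /\ forall u v, Aset k1 k2 g u v -> Rle (f x y) (f u v).
Proof.
move=> cf cg ck1 ck2 [x0 [y0 A0]].
pose P (h : R -> R -> R) := (fun z : R*R => h z.1 z.2) @^-1` [set r : R | r <= 0].
have cP h : cont2 h -> closed (P h).
  move=> ch; apply: preimage_closed; last exact: closed_le.
  by move=> z _; apply: cont2_cont.
pose K := P k1 `&` P k2 `&` P bx1 `&` P bx2 `&` P by1 `&` P by2
  `&` (fun z : R*R => g z.1 z.2) @^-1` [set 0].
have KA z : K z <-> Aset k1 k2 g z.1 z.2.
  rewrite /K /P /Aset /=; split.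
    move=> [[[[[[/RleP h1 /RleP h2] /RleP h3] /RleP h4] /RleP h5] /RleP h6] h7].
    have [hx hy] := box_help1 _ _ h3 h4 h5 h6.
    by split; [|split; [|split;[|split]]].
  move=> [h3 [h4 [h1 [h2 h7]]]].
  have [b1 [b2 [b3 b4]]] := box_help2 _ _ h3 h4.
  by repeat split => //; apply/RleP.
have cK : compact K.
  pose B := (`[-1, 1] : set R) `*` (`[-1, 1] : set R).
  apply: (@subclosed_compact _ K B).
  - apply: closedI; last first.
      apply: preimage_closed; last exact: closed_eq.
      by move=> z _; apply: cont2_cont.
    have [c1 [c2 [c3 c4]]] := cont2_b.
    by repeat apply: closedI; apply: cP.
  - by apply: compact_setX; apply: segment_compact.
  - move=> z /KA [[h1 h2] [[h3 h4] _]] /=.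
    by rewrite /B /=; split; apply/andP; split; apply/RleP.
have K0 : K !=set0 by exists (x0, y0); apply/KA.
have [c cK1 cmin] := compact_EVT_min K0 cK (continuous_subspaceT (cont2_cont _ cf)).
rewrite inE in cK1.
exists c.1, c.2; split; first exact/KA.
move=> u v Auv.
have H : (u, v) \in K by rewrite inE; exact/KA.
move: (cmin _ H) => /RleP H2; exact H2.
Qed.

End S.
End MC.

Lemma sqrt_lt1 s : 0 <= s -> sqrt s < 1 -> s < 1.
Proof.
intros H0 H. destruct (Rlt_or_le s 1) as [|H1]; auto.
pose proof (sqrt_le_1_alt 1 s H1) as H2. rewrite sqrt_1 in H2. lra.
Qed.
Lemma sqrt_lt1' s : 0 <= s -> s < 1 -> sqrt s < 1.
Proof. intros H0 H. rewrite <- sqrt_1. apply sqrt_lt_1_alt; lra. Qed.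

Theorem lemma1 (n : nat) (a : nat -> R) (hn : (1 <= n)%nat)
  (hsum : sum1n n a = 1) :
  exists t0 : R,
    Sfun n a t0 = 0 /\
    (forall t : R, Sfun n a t = 0 -> Cfun n a t0 <= Cfun n a t) /\
    Cfun n a t0 < 0.
Proof.
set (Pre := fun x y => fst (pz n a (x, y))).
set (Pim := fun x y => snd (pz n a (x, y))).
set (k1 := fun x y : R => x * x + y * y - 1).
set (km := fun _ _ : R => -1).
set (k2 := fun x y : R => 1 - x * x - y * y).
assert (ck1 : cont2 k1).
{ apply (cont2_ext (fun x y => (x * x + y * y) + -1)); [intros; unfold k1; ring|].
  apply cont2_plus; [|apply cont2_const].
  apply cont2_plus; apply cont2_mult; try apply cont2_x; apply cont2_y. }
assert (ck2 : cont2 k2).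
{ apply (cont2_ext (fun x y => (-1 * (x * x + y * y)) + 1)); [intros; unfold k2; ring|].
  apply cont2_plus; [|apply cont2_const]. apply cont2_mult; [apply cont2_const|].
  apply cont2_plus; apply cont2_mult; try apply cont2_x; apply cont2_y. }
assert (ckm : cont2 km) by apply cont2_const.
assert (H10 : pz n a (RtoC 1) <> pz n a (RtoC 0)).
{ intros H. assert (Hf := f_equal fst H). rewrite pz_1, hsum, pz_0 in Hf. simpl in Hf. lra. }
assert (Hnc : forall z0, exists w, pz n a w <> pz n a z0).
{ intros z0. destruct (classic (pz n a (RtoC 1) = pz n a z0)) as [E|E].
  - exists (RtoC 0). intros E'. apply H10. congruence.
  - exists (RtoC 1). exact E. }
destruct (pz_ev n a) as [l Hl].
destruct (openness (pz n a) l Hl (RtoC 0) (Hnc _) 1 Rlt_0_1) as [h0 [Hh0 [Him0 Hre0]]].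
replace (RtoC 0 + h0)%C with h0 in Him0, Hre0 by ring.
rewrite pz_0 in Him0, Hre0. simpl in Him0, Hre0.
destruct h0 as [x0 y0].
rewrite Cmod_pair in Hh0.
assert (Hs0 : x0 * x0 + y0 * y0 < 1) by (apply sqrt_lt1; nra).
assert (A0 : Aset k1 km Pim x0 y0).
{ unfold Aset, k1, km, Pim. repeat split; first [exact Him0 | nra]. }
destruct (MC.EVT2 Pre Pim k1 km (Pre_cont n a) (Pim_cont n a) ck1 ckm (ex_intro _ x0 (ex_intro _ y0 A0)))
  as [xs [ys [As Hmin]]].
assert (Hneg : Pre xs ys < 0).
{ pose proof (Hmin x0 y0 A0). unfold Pre in *. lra. }
assert (Hcirc : xs * xs + ys * ys = 1).
{ destruct As as [Hbx [Hby [Hk1 [_ Hg]]]]. unfold k1 in Hk1.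
  destruct (Rle_lt_or_eq_dec _ _ (Rle_trans _ _ _ (Rplus_le_compat_r 1 _ _ Hk1) (Req_le _ _ (Rplus_0_l 1)))) as [Hlt|Heq].
  2: { lra. }
  exfalso.
  assert (Hlt1 : xs * xs + ys * ys < 1) by lra.
  pose proof (sqrt_lt1' (xs * xs + ys * ys) ltac:(nra) Hlt1) as Hsq.
  rewrite <- Cmod_pair in Hsq.
  destruct (openness (pz n a) l Hl (xs, ys) (Hnc _) (1 - Cmod (xs, ys)) ltac:(lra))
    as [h [Hh [Him Hre]]].
  pose proof (Cmod_triangle (xs, ys) h) as Htri.
  destruct ((xs, ys) + h)%C as [x1 y1] eqn:E.
  rewrite Cmod_pair in Htri.
  assert (Hs1 : x1 * x1 + y1 * y1 < 1) by (apply sqrt_lt1; nra).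
  assert (A1 : Aset k1 km Pim x1 y1).
  { unfold Aset, k1, km, Pim. repeat split; first [ (rewrite Him; exact Hg) | nra]. }
  pose proof (Hmin x1 y1 A1). unfold Pre in *. lra. }
assert (Ac : Aset k1 k2 Pim xs ys).
{ destruct As as [Hbx [Hby [Hk1 [_ Hg]]]]. unfold Aset, k2. repeat split; auto; lra. }
destruct (MC.EVT2 Pre Pim k1 k2 (Pre_cont n a) (Pim_cont n a) ck1 ck2 (ex_intro _ xs (ex_intro _ ys Ac)))
  as [xc [yc [Acc Hminc]]].
assert (Hc1 : xc * xc + yc * yc = 1).
{ destruct Acc as [_ [_ [H1 [H2 _]]]]. unfold k1, k2 in *. lra. }
destruct (circle xc yc Hc1) as [t0 [Ht1 Ht2]].
assert (He : ei t0 = (xc, yc)) by (unfold ei; rewrite Ht1, Ht2; reflexivity).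
destruct (pz_ei n a t0) as [HC0 HS0]. rewrite He in HC0, HS0.
exists t0. split; [|split].
- rewrite <- HS0. destruct Acc as [_ [_ [_ [_ Hg]]]]. exact Hg.
- intros t Ht. destruct (pz_ei n a t) as [HC HS].
  assert (At : Aset k1 k2 Pim (cos t) (sin t)).
  { pose proof (sin2_cos2 t) as Hsc. unfold Rsqr in Hsc.
    pose proof (COS_bound t). pose proof (SIN_bound t).
    unfold Aset, k1, k2, Pim. repeat split; try lra.
    rewrite <- Ht, <- HS. reflexivity. }
  pose proof (Hminc _ _ At) as Hle. unfold Pre in Hle.
  rewrite <- HC0, <- HC. exact Hle.
- rewrite <- HC0. pose proof (Hminc xs ys Ac). unfold Pre in *. lra.
Qed.
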